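(* Let $G=(N,S,(u_i)_{i\in N})$ be a game with solution set $D\subseteq S$, and let $\alpha,\beta\ge1$. If over $D$ the utility of every player is $\beta$ varied and $\alpha$-lower dependent on coordination, then $\mathrm{PoTA}\ge \mathrm{PoA}/(\alpha\beta)$. If over $D$ the utility of every player is $\beta$ varied and $\alpha$-upper dependent on coordination, then $\mathrm{PoTS}\le\alpha\beta\,\mathrm{PoS}$.
   Context: $T(D)$ is the set of transitions: profiles $t$ such that for every $i$ there is $d\in D$ with $t_i=d_i$. $\mathrm{sw}(s)=\sum_iu_i(s)$, assumed to have positive maximum over $S$; minima/maxima are read as infima/suprema if not attained. $\mathrm{PoA}=\min_{D}\mathrm{sw}/\max_S\mathrm{sw}$, $\mathrm{PoS}=\max_D\mathrm{sw}/\max_S\mathrm{sw}$, $\mathrm{PoTA}=\min_{T(D)}\mathrm{sw}/\max_S\mathrm{sw}$, $\mathrm{PoTS}=\max_{T(D)}\mathrm{sw}/\max_S\mathrm{sw}$. Player $i$'s utility over $A\subseteq S$ is $\alpha$-lower dependent on coordination if $\min_{s\in T(A)}u_i(s)\ge\min_{t\in A}u_i(t)/\alpha$, and $\alpha$-upper dependent on coordination if $\max_{s\in T(A)}u_i(s)\le\alpha\max_{t\in A}u_i(t)$. Player $i$'s utility is $\beta$ varied over $A$ if for all $s,t\in A$, $\mathrm{sw}(s)\ge\mathrm{sw}(t)\Rightarrow u_i(s)\ge u_i(t)/\beta$. *)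

(* Defs.v *)
From HB Require Import structures.
From mathcomp Require Import all_boot all_order all_algebra.
From mathcomp Require Import all_classical all_reals all_analysis.
Set Implicit Arguments. Unset Strict Implicit. Unset Printing Implicit Defensive.
Import Order.TTheory GRing.Theory Num.Theory.
Local Open Scope classical_set_scope.
Local Open Scope ring_scope.

Section Game.
Variables (R : realType) (I : finType) (X : I -> Type).

Definition profile := forall i : I, X i.

Variable u : I -> profile -> R.

Definition transitions (A : set profile) : set profile :=
  [set t | forall i, exists2 d, A d & t i = d i].

Definition sw (s : profile) : R := \sum_(i : I) u i s.

(* sup over S of sw (extended reals: suprema/infima when not attained) *)
Definition maxS : \bar R := ereal_sup [set (sw s)%:E | s in setT].

Definition PoA (D : set profile) : \bar R :=
  (ereal_inf [set (sw s)%:E | s in D] * ((fine maxS)^-1)%:E)%E.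
Definition PoS (D : set profile) : \bar R :=
  (ereal_sup [set (sw s)%:E | s in D] * ((fine maxS)^-1)%:E)%E.
Definition PoTA (D : set profile) : \bar R :=
  (ereal_inf [set (sw s)%:E | s in transitions D] * ((fine maxS)^-1)%:E)%E.
Definition PoTS (D : set profile) : \bar R :=
  (ereal_sup [set (sw s)%:E | s in transitions D] * ((fine maxS)^-1)%:E)%E.

Definition lower_dependent (alpha : R) (i : I) (A : set profile) : Prop :=
  (ereal_inf [set (u i t)%:E | t in A] * (alpha^-1)%:E
     <= ereal_inf [set (u i s)%:E | s in transitions A])%E.

Definition upper_dependent (alpha : R) (i : I) (A : set profile) : Prop :=
  (ereal_sup [set (u i s)%:E | s in transitions A]
     <= alpha%:E * ereal_sup [set (u i t)%:E | t in A])%E.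

Definition varied (beta : R) (i : I) (A : set profile) : Prop :=
  forall s t, A s -> A t -> sw t <= sw s -> u i t / beta <= u i s.

End Game.

(* Main.v *)
Require Import Defs.
From HB Require Import structures.
From mathcomp Require Import all_boot all_order all_algebra.
From mathcomp Require Import all_classical all_reals all_analysis.
Import Order.TTheory GRing.Theory Num.Theory.
Local Open Scope classical_set_scope.
Local Open Scope ring_scope.

Section Aux.
Variables (R : realType) (I : finType) (X : I -> Type).
Variable u : I -> profile X -> R.

Lemma core_lower (D : set (profile X)) (alpha beta m : R) (t : profile X) (i0 : I) :
  0 < alpha -> 0 < beta ->
  (forall i, varied u beta i D) ->
  (forall d, D d -> m <= sw u d) ->
  (forall i e, 0 < e -> exists s, D s /\ u i s < alpha * u i t + e) ->
  m / beta <= alpha * sw u t.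
Proof.
move=> a0 b0 hv hm happ.
apply/ler_addgt0Pr => e e0.
have cI : (0 < #|I|)%N by apply/card_gt0P; exists i0.
have cIR : 0 < (#|I|%:R : R) by rewrite ltr0n.
have e'0 : 0 < e / #|I|%:R by rewrite divr_gt0.
have [s hs] := choice (fun i => happ i _ e'0).
pose j := [arg min_(k < i0) sw u (s k)]%O.
have hj : forall k, sw u (s j) <= sw u (s k).
  by rewrite /j; case: arg_minP => // k _ H k'; apply: H.
have Dj : D (s j) by case: (hs j).
apply: (@le_trans _ _ (\sum_i u i (s i))).
  apply: (@le_trans _ _ (sw u (s j) / beta)).
    by rewrite ler_pM2r ?invr_gt0 //; apply: hm.
  rewrite /sw mulr_suml; apply: ler_sum => i _.
  apply: (hv i) => //; first by case: (hs i).
apply: (@le_trans _ _ (\sum_i (alpha * u i t + e / #|I|%:R))).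
  by apply: ler_sum => i _; apply: ltW; case: (hs i).
rewrite big_split /= -mulr_sumr sumr_const.
rewrite (_ : e / #|I|%:R *+ #|xpredT| = e) //.
by rewrite -(mulr_natr (e / _)) divfK ?gt_eqF.
Qed.

Lemma core_upper (D : set (profile X)) (alpha beta m : R) (t : profile X) (i0 : I) :
  0 < alpha -> 0 < beta ->
  (forall i, varied u beta i D) ->
  (forall d, D d -> sw u d <= m) ->
  (forall i e, 0 < e -> exists s, D s /\ u i t - e < alpha * u i s) ->
  sw u t <= alpha * (beta * m).
Proof.
move=> a0 b0 hv hm happ.
apply/ler_addgt0Pr => e e0.
have cI : (0 < #|I|)%N by apply/card_gt0P; exists i0.
have cIR : 0 < (#|I|%:R : R) by rewrite ltr0n.
have e'0 : 0 < e / #|I|%:R by rewrite divr_gt0.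
have [s hs] := choice (fun i => happ i _ e'0).
pose j := [arg max_(k > i0) sw u (s k)]%O.
have hj : forall k, sw u (s k) <= sw u (s j).
  by rewrite /j; case: arg_maxP => // k _ H k'; apply: H.
have Dj : D (s j) by case: (hs j).
have H1 : \sum_i u i (s i) <= beta * m.
  apply: (@le_trans _ _ (beta * sw u (s j))); last first.
    by rewrite ler_pM2l //; apply: hm.
  rewrite /sw mulr_sumr; apply: ler_sum => i _.
  rewrite -ler_pdivrMl //. rewrite mulrC.
  apply: (hv i) => //; by case: (hs i).
have H2 : \sum_i (u i t - e / #|I|%:R) <= alpha * \sum_i u i (s i).
  rewrite mulr_sumr; apply: ler_sum => i _; apply: ltW; by case: (hs i).
have H3 : \sum_i (u i t - e / #|I|%:R) = sw u t - e.
  rewrite big_split /= sumr_const.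
  rewrite (_ : - (e / #|I|%:R) *+ #|xpredT| = - e) //.
  by rewrite mulNrn -(mulr_natr (e / _)) divfK ?gt_eqF.
rewrite H3 in H2.
have : sw u t - e <= alpha * (beta * m).
  apply: (le_trans H2); by rewrite ler_pM2l.
by rewrite lerBlDr.
Qed.

End Aux.

Theorem proposition1 (R : realType) (I : finType) (X : I -> Type)
    (u : I -> profile X -> R) (D : set (profile X)) (alpha beta : R) :
  1 <= alpha -> 1 <= beta ->
  (0 < maxS u)%E -> (maxS u < +oo)%E ->
  ((forall i, varied u beta i D /\ lower_dependent u alpha i D) ->
     (PoA u D * ((alpha * beta)^-1)%:E <= PoTA u D)%E) /\
  ((forall i, varied u beta i D /\ upper_dependent u alpha i D) ->
     (PoTS u D <= (alpha * beta)%:E * PoS u D)%E).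
Proof.
move=> a1 b1 M0 Moo.
have a0 : 0 < alpha by apply: lt_le_trans a1.
have b0 : 0 < beta by apply: lt_le_trans b1.
have Mfin : maxS u \is a fin_num by rewrite gt0_fin_numE.
have Mpos : 0 < fine (maxS u) by rewrite -lte_fin fineK.
have cfin : ((fine (maxS u))^-1)%:E \is a fin_num by [].
have cpos : (0 < ((fine (maxS u))^-1)%:E)%E by rewrite lte_fin invr_gt0.
have [i0 _ | hI] := pickP (fun _ : I => true); last first.
  exfalso; have [y [s _ <-] ys] := ereal_sup_gt M0.
  move: ys; rewrite /sw big_pred0 //; by rewrite ltxx.
split.
- move=> H.
  rewrite /PoA /PoTA muleAC lee_pmul2r //.
  apply/ereal_infP => y [t Tt <-].
  have [d Dd _] := Tt i0.
  case E: (ereal_inf [set (sw u s)%:E | s in D]) => [m| |].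
  + rewrite -EFinM lee_fin invfM mulrA mulrAC ler_pdivrMr // (mulrC (sw u t)).
    apply: (@core_lower _ _ _ u D alpha beta _ t i0 a0 b0).
    * by move=> i; case: (H i).
    * move=> d' Dd'; rewrite -lee_fin -E; apply: ereal_inf_lbound; by exists d'.
    * move=> i e e0.
      have hi : (ereal_inf [set (u i s)%:E | s in D] <= (alpha * u i t)%:E)%E.
        rewrite -(@lee_pmul2r _ (alpha^-1)%:E) //; last by rewrite lte_fin invr_gt0.
        rewrite -EFinM mulrC mulKf ?gt_eqF //.
        apply: (le_trans (proj2 (H i))); apply: ereal_inf_lbound; by exists t.
      have : (ereal_inf [set (u i s)%:E | s in D] < (alpha * u i t + e)%:E)%E.
        by apply: (le_lt_trans hi); rewrite lte_fin ltrDl.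
      move=> /ereal_inf_lt [z [s Ds <-]]; rewrite lte_fin => hs.
      by exists s.
  + exfalso.
    have : (ereal_inf [set (sw u s)%:E | s in D] <= (sw u d)%:E)%E.
      by apply: ereal_inf_lbound; exists d.
    by rewrite E.
  + by rewrite gt0_mulNye ?leNye // lte_fin invr_gt0 mulr_gt0.
- move=> H.
  rewrite /PoS /PoTS muleA lee_pmul2r //.
  apply/ereal_supP => y [t Tt <-].
  have [d Dd _] := Tt i0.
  case E: (ereal_sup [set (sw u s)%:E | s in D]) => [m| |].
  + rewrite -EFinM lee_fin -mulrA.
    apply: (@core_upper _ _ _ u D alpha beta _ t i0 a0 b0).
    * by move=> i; case: (H i).
    * move=> d' Dd'; rewrite -lee_fin -E; apply: ereal_sup_ubound; by exists d'.
    * move=> i e e0.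
      have hi : ((u i t)%:E <= alpha%:E * ereal_sup [set (u i s)%:E | s in D])%E.
        apply: le_trans (proj2 (H i)); apply: ereal_sup_ubound; by exists t.
      have : (((u i t - e) / alpha)%:E < ereal_sup [set (u i s)%:E | s in D])%E.
        rewrite ltNge; apply/negP => hle.
        have: (alpha%:E * ereal_sup [set (u i s)%:E | s in D] <= ((u i t - e))%:E)%E.
          apply: (le_trans (lee_wpmul2l _ hle)); first by rewrite lee_fin ltW.
          by rewrite -EFinM mulrC divfK ?gt_eqF.
        move=> h1; have := le_trans hi h1; rewrite lee_fin.
        by rewrite lerBrDr gerDl leNgt e0.
      move=> /ereal_sup_gt [z [s Ds <-]]; rewrite lte_fin => hs.
      exists s; split => //; by rewrite (mulrC alpha) -ltr_pdivrMr.
  + exfalso.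
    have : (ereal_sup [set (sw u s)%:E | s in D] <= maxS u)%E.
      apply/ereal_supP => z [d' _ <-]; apply: ereal_sup_ubound; by exists d'.
    by rewrite E leNgt Moo.
  + exfalso.
    have : ((sw u d)%:E <= ereal_sup [set (sw u s)%:E | s in D])%E.
      by apply: ereal_sup_ubound; exists d.
    by rewrite E leeNy_eq.
Qed.
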